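(* An integer sequence $(a_n)_{n\ge1}$ is a strong Euler–Gauss sequence if and only if $\left(\frac{a_{p^rm}}{\gcd(a_{p^rm},a_{p^{r-1}m})}\right)^{-1}\equiv\left(\frac{a_{p^{r-1}m}}{\gcd(a_{p^rm},a_{p^{r-1}m})}\right)^{-1}\pmod{p^r}$ for all primes $p$ and all integers $r\ge1$, $m\ge1$.
   Context: $\mu$ is the Möbius function; $x^{-1}$ denotes the inverse of $x$ modulo the relevant modulus (the quotients are required to be invertible). For an integer sequence $(a_n)$ and $n\ge1$, $A_n^+=\prod_{d\mid n,\ \mu(d)=1} a_{n/d}$ and $A_n^-=\prod_{d\mid n,\ \mu(d)=-1} a_{n/d}$ (empty products equal $1$). An integer sequence is a strong Euler–Gauss sequence if for all $n\ge1$, $\left(\frac{A_n^-}{\gcd(A_n^+,A_n^-)}\right)^{-1}\equiv\left(\frac{A_n^+}{\gcd(A_n^+,A_n^-)}\right)^{-1}\pmod n$. *)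

(* Defs.v *)
From HB Require Import structures.
From mathcomp Require Import all_boot all_order all_algebra.
Set Implicit Arguments. Unset Strict Implicit. Unset Printing Implicit Defensive.
Import Order.TTheory GRing.Theory Num.Theory.
Local Open Scope ring_scope.

(* Möbius function: mu 0 = 0 (convention, never used), mu n = (-1)^k if n>0
   is squarefree with k prime factors, 0 otherwise. *)
Definition moebius (n : nat) : int :=
  if n == 0%N then 0
  else if all (fun pe : nat * nat => pe.2 == 1%N) (prime_decomp n)
       then (-1) ^+ size (primes n) else 0.

Definition Aplus (a : nat -> int) (n : nat) : int :=
  \prod_(d <- divisors n | moebius d == 1) a (n %/ d)%N.
Definition Aminus (a : nat -> int) (n : nat) : int :=
  \prod_(d <- divisors n | moebius d == -1) a (n %/ d)%N.

(* x^{-1} = y^{-1} (mod n), with x and y required to be invertible mod n: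
   there are inverses u of x and v of y modulo n, and u = v (mod n). *)
Definition inv_congr (n x y : int) : Prop :=
  exists u v : int,
    (x * u = 1 %[mod n])%Z /\ (y * v = 1 %[mod n])%Z /\ (u = v %[mod n])%Z.

Definition strong_EG (a : nat -> int) : Prop :=
  forall n : nat, (0 < n)%N ->
    let g := gcdz (Aplus a n) (Aminus a n) in
    inv_congr n%:Z (Aminus a n %/ g)%Z (Aplus a n %/ g)%Z.

(* Main.v *)
Require Import Defs.
From HB Require Import structures.
From mathcomp Require Import all_boot all_order all_algebra.
From mathcomp Require Import ring zify.
Import Order.TTheory GRing.Theory Num.Theory.
Set Implicit Arguments. Unset Strict Implicit.
Local Open Scope ring_scope.

Lemma mu_def n : (0 < n)%N -> moebius n =
  if all (fun q => logn q n == 1%N) (primes n) then (-1) ^+ size (primes n) else 0.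
Proof.
by case: n => // n _; rewrite /moebius /= prime_decompE all_map.
Qed.

Lemma mu1 : moebius 1 = 1.
Proof. by []. Qed.

Lemma mu_gt0 n : moebius n != 0 -> (0 < n)%N.
Proof. by case: n. Qed.

Lemma mu_logn n q : moebius n != 0 -> (logn q n <= 1)%N.
Proof.
move=> mn; have n0 := mu_gt0 mn; move: mn; rewrite mu_def //.
case: ifP => [/allP H _|]; last by rewrite eqxx.
case qn: (q \in primes n); first by rewrite (eqP (H q qn)).
by move: qn; rewrite -logn_gt0; case: (logn q n).
Qed.

Lemma mu_pM p d : prime p -> (0 < d)%N -> ~~ (p %| d)%N ->
  moebius (p * d)%N = - moebius d.
Proof.
move=> pp d0 pd; have p0 := prime_gt0 pp.
have pdp : perm_eq (primes (p * d)%N) (p :: primes d).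
  apply: uniq_perm; first exact: primes_uniq.
    by rewrite /= primes_uniq andbT mem_primes pp d0 pd.
  by move=> q; rewrite primesM // primes_prime // in_cons inE orbF.
rewrite (mu_def d0) mu_def ?muln_gt0 ?p0 //.
rewrite (perm_size pdp) (perm_all _ pdp) /= lognM // logn_prime // eqxx.
rewrite (logn_coprime (m:=d)) ?prime_coprime // addn0 eqxx /=.
have -> : all (fun q => logn q (p * d)%N == 1%N) (primes d) = all (fun q => logn q d == 1%N) (primes d).
  apply: eq_in_all => q; rewrite mem_primes => /and3P[qp _ qd].
  rewrite lognM // logn_prime //; case: (q =P p) => [eqp|//]; by rewrite -eqp qd in pd.

by case: ifP => _; rewrite ?oppr0 // exprS mulN1r.
Qed.

Lemma perm_sqf_div p r m : prime p -> (0 < r)%N -> (0 < m)%N -> coprime p m ->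
  perm_eq [seq d <- divisors (p ^ r * m)%N | moebius d != 0]
   ([seq d <- divisors m | moebius d != 0] ++ map (muln p) [seq d <- divisors m | moebius d != 0]).
Proof.
move=> pp r0 m0 cpm; set L := [seq d <- divisors m | moebius d != 0]; have p0 := prime_gt0 pp.
have n0 : (0 < p ^ r * m)%N by rewrite muln_gt0 expn_gt0 p0.
have npm : ~~ (p %| m)%N by rewrite -prime_coprime.
apply: uniq_perm.
- by rewrite filter_uniq // divisors_uniq.
- rewrite cat_uniq filter_uniq ?divisors_uniq //= map_inj_uniq ?filter_uniq ?divisors_uniq //; last first.
    by move=> x y /eqP; rewrite eqn_mul2l (gtn_eqF p0) => /eqP.
  rewrite andbT; apply/hasPn => x /mapP [y _ ->]; rewrite /L mem_filter -dvdn_divisors //.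
  apply/negP => /andP [_ /(dvdn_trans (dvdn_mulr y (dvdnn p)))]; by rewrite (negbTE npm).
move=> x; rewrite mem_cat mem_filter -dvdn_divisors // /L mem_filter -dvdn_divisors //.
apply/idP/idP.
- case/andP => mx xn; have x0 := mu_gt0 mx.
  case px: (p %| x)%N; last first.
    apply/orP; left; rewrite mx /=.
    rewrite -(@Gauss_dvdr _ (p ^ r)) //; apply: coprimeXr; rewrite coprime_sym prime_coprime //.
    by rewrite px.
  have [y xE] : exists y, x = (p * y)%N by exists (x %/ p)%N; rewrite mulnC divnK.
  subst x; apply/orP; right; apply/mapP; exists y => //.
  have y0 : (0 < y)%N by move: x0; rewrite muln_gt0 => /andP[].
  have py : ~~ (p %| y)%N.
    apply/negP => /dvdnP [k kE]; have := mu_logn p mx.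
    have k0 : (0 < k)%N by move: y0; rewrite kE muln_gt0 => /andP[].
    by rewrite kE !lognM ?muln_gt0 ?k0 ?p0 // logn_prime // eqxx; lia.
  rewrite mem_filter -dvdn_divisors //.
  have -> : moebius y != 0 by move: mx; rewrite mu_pM // oppr_eq0.
  rewrite /= -(@Gauss_dvdr _ (p ^ r.-1)); last first.
    by apply: coprimeXr; rewrite coprime_sym prime_coprime.
  by rewrite -(@dvdn_pmul2l p) // mulnA -expnS prednK.
- case/orP => [/andP [mx xm]|/mapP [y]].
    by rewrite mx /=; apply: dvdn_trans xm (dvdn_mull _ (dvdnn _)).
  rewrite mem_filter -dvdn_divisors // => /andP [my ym] ->.
  have y0 := mu_gt0 my.
  have py : ~~ (p %| y)%N by apply/negP => /(dvdn_trans)/(_ ym); rewrite (negbTE npm).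
  rewrite mu_pM // oppr_eq0 my /= -(prednK r0) expnS -mulnA dvdn_pmul2l //.
  exact: dvdn_mull.
Qed.

Lemma prod_split (F : nat -> int) p r m e :
  prime p -> (0 < r)%N -> (0 < m)%N -> coprime p m -> e != 0 ->
  \prod_(d <- divisors (p ^ r * m)%N | moebius d == e) F ((p ^ r * m) %/ d)%N =
  \prod_(d <- divisors m | moebius d == e) F (p ^ r * (m %/ d))%N *
  \prod_(d <- divisors m | moebius d == - e) F (p ^ r.-1 * (m %/ d))%N.
Proof.
move=> pp r0 m0 cpm e0; have p0 := prime_gt0 pp.
have npm : ~~ (p %| m)%N by rewrite -prime_coprime.
rewrite (eq_bigl (fun d => (moebius d != 0) && (moebius d == e))); last first.
  by move=> d; case: (moebius d =P e) => [->|]; rewrite ?e0 ?andbF.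
rewrite -big_filter_cond (perm_big _ (perm_sqf_div pp r0 m0 cpm)) big_cat big_map /=.
rewrite !big_filter_cond; congr (_ * _).
  rewrite big_seq_cond [RHS]big_seq_cond; apply: eq_big => d.
    by case: (d \in divisors m) => //=; case: (moebius d =P e) => [->|]; rewrite ?e0 ?andbF.
  rewrite -dvdn_divisors // => /andP [dm _]; congr F.
  by rewrite muln_divA.
rewrite big_seq_cond [RHS]big_seq_cond; apply: eq_big => d.
  case dm: (d \in divisors m) => //=.
  move: dm; rewrite -dvdn_divisors // => dm.
  have d0 : (0 < d)%N by apply: dvdn_gt0 dm.
  have pd : ~~ (p %| d)%N by apply/negP => /(dvdn_trans)/(_ dm); rewrite (negbTE npm).
  by rewrite mu_pM // eqr_oppLR; case: (moebius d =P - e) => [->|]; rewrite ?oppr_eq0 ?e0 ?andbF.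
rewrite -dvdn_divisors // => /andP [dm _]; congr F.
rewrite -{1}(prednK r0) expnS -mulnA divnMl // muln_divA //.
Qed.

Definition Rel (p k : nat) (x y : int) : Prop :=
  x != 0 /\ y != 0 /\ exists s t : int,
    x * t = y * s /\ ~~ (p%:Z %| t)%Z /\ ((p ^ k)%N%:Z %| s - t)%Z.

Lemma Euclid_z p a b : prime p -> (p%:Z %| a * b)%Z = (p%:Z %| a)%Z || (p%:Z %| b)%Z.
Proof. by move=> pp; rewrite !dvdzE abszM Euclid_dvdM. Qed.

Lemma dvdz_pk p k z : (0 < k)%N -> ((p ^ k)%N%:Z %| z)%Z -> (p%:Z %| z)%Z.
Proof.
move=> k0; rewrite !dvdzE /=; apply: dvdn_trans.
by rewrite -{1}(expn1 p) dvdn_exp2l.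
Qed.

Lemma ndvd_s p k s t : prime p -> (0 < k)%N -> ~~ (p%:Z %| t)%Z ->
  ((p ^ k)%N%:Z %| s - t)%Z -> ~~ (p%:Z %| s)%Z.
Proof.
move=> pp k0 pt /(dvdz_pk k0) pst; apply/negP => ps; move: pt; apply/negP/negPn.
have := rpredB ps pst; by have -> : s - (s - t) = t by ring.
Qed.

Lemma Rel_refl p k x : prime p -> x != 0 -> Rel p k x x.
Proof.
move=> pp x0; split => //; split => //; exists 1, 1; split => //; split.
  by rewrite dvdzE /= dvdn1; apply/eqP => p1; move: pp; rewrite p1.
by rewrite subrr dvdz0.
Qed.

Lemma Rel_sym p k x y : prime p -> (0 < k)%N -> Rel p k x y -> Rel p k y x.
Proof.
move=> pp k0 [x0 [y0 [s [t [e [pt pst]]]]]]; split => //; split => //.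
exists t, s; split; first by rewrite e.
split; first exact: ndvd_s pt pst.
by rewrite -opprB rpredN.
Qed.

Lemma Rel_mul p k x y x' y' : prime p -> Rel p k x y -> Rel p k x' y' ->
  Rel p k (x * x') (y * y').
Proof.
move=> pp [x0 [y0 [s [t [e [pt pst]]]]]] [x0' [y0' [s' [t' [e' [pt' pst']]]]]].
split; first by rewrite mulf_neq0.
split; first by rewrite mulf_neq0.
exists (s * s'), (t * t'); split.
  transitivity ((x * t) * (x' * t')); first by ring.
  by rewrite e e'; ring.
split; first by rewrite Euclid_z // negb_or pt pt'.
have -> : s * s' - t * t' = s * (s' - t') + (s - t) * t' by ring.
by apply: rpredD; [apply: dvdz_mull | apply: dvdz_mulr].
Qed.

Lemma Rel_cancel p k x y x' y' : prime p -> (0 < k)%N -> Rel p k x y ->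
  Rel p k (x * x') (y * y') -> Rel p k x' y'.
Proof.
move=> pp k0 [x0 [y0 [s [t [e [pt pst]]]]]] [xx0 [yy0 [S [T [E [pT pST]]]]]].
split; first by move: xx0; rewrite mulf_eq0 negb_or => /andP[].
split; first by move: yy0; rewrite mulf_eq0 negb_or => /andP[].
have ps := ndvd_s pp k0 pt pst.
exists (S * t), (s * T); split.
  apply: (mulfI y0).
  transitivity ((x * t) * x' * T); first by rewrite e; ring.
  transitivity ((x * x' * T) * t); first by ring.
  by rewrite E; ring.
split; first by rewrite Euclid_z // negb_or ps pT.
have -> : S * t - s * T = (S - T) * t - T * (s - t) by ring.
by apply: rpredB; [apply: dvdz_mulr | apply: dvdz_mull].
Qed.

Lemma Rel_weak p k k' x y : (k' <= k)%N -> Rel p k x y -> Rel p k' x y.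
Proof.
move=> kk [x0 [y0 [s [t [e [pt pst]]]]]]; split => //; split => //.
exists s, t; split => //; split => //.
by apply: dvdz_trans pst; rewrite dvdzE /= dvdn_exp2l.
Qed.

Lemma Rel_prod p k (I : Type) (r : seq I) (P : pred I) (F G : I -> int) :
  prime p -> (forall i, P i -> Rel p k (F i) (G i)) ->
  Rel p k (\prod_(i <- r | P i) F i) (\prod_(i <- r | P i) G i).
Proof.
move=> pp H; apply: (big_ind2 (Rel p k)) => //.
  exact: Rel_refl.
by move=> ? ? ? ?; apply: Rel_mul.
Qed.

Definition Cp (p k : nat) (X Y : int) : Prop :=
  ~~ (p%:Z %| X)%Z /\ ~~ (p%:Z %| Y)%Z /\ ((p ^ k)%N%:Z %| X - Y)%Z.

Lemma L1 n X Y : (0 < n)%N ->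
  inv_congr n%:Z X Y <-> (forall q, q \in primes n -> Cp q (logn q n) X Y).
Proof.
move=> n0; split.
  move=> [u [v [h1 [h2 h3]]]].
  move/eqP: h1; rewrite eqz_mod_dvd => h1.
  move/eqP: h2; rewrite eqz_mod_dvd => h2.
  move/eqP: h3; rewrite eqz_mod_dvd => h3.
  have nXY : (n%:Z %| X - Y)%Z.
    have -> : X - Y = - X * (Y * v - 1) + Y * (X * u - 1) - X * Y * (u - v) by ring.
    by apply: rpredB; [apply: rpredD|]; apply: dvdz_mull.
  move=> q; rewrite mem_primes => /and3P [qp _ qn].
  have qnz : (q%:Z %| n%:Z)%Z by rewrite dvdzE.
  have q1 : ~~ (q%:Z %| 1)%Z by rewrite dvdzE /= dvdn1; apply/eqP => q1; move: qp; rewrite q1.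
  split.
    apply/negP => qX; move: q1; apply/negP/negPn.
    have := rpredB (dvdz_mulr u qX) (dvdz_trans qnz h1).
    by have -> : X * u - (X * u - 1) = 1 by ring.
  split.
    apply/negP => qY; move: q1; apply/negP/negPn.
    have := rpredB (dvdz_mulr v qY) (dvdz_trans qnz h2).
    by have -> : Y * v - (Y * v - 1) = 1 by ring.
  by apply: dvdz_trans nXY; rewrite dvdzE /= pfactor_dvdnn.
move=> H.
have nXY : (n%:Z %| X - Y)%Z.
  rewrite dvdzE /=; apply/dvdn_partP => // q; move=> qn.
  have [_ [_ h]] := H q qn.
  by rewrite p_part; move: h; rewrite dvdzE.
have cX : coprimez X n.
  rewrite coprimezE /=; apply/eqP; set g := gcdn _ _.
  have g0 : (0 < g)%N by rewrite gcdn_gt0 n0 orbT.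
  apply/eqP; rewrite eqn_leq g0 andbT leqNgt; apply/negP => g1.
  have pp := pdiv_prime g1.
  have pg := pdiv_dvd g.
  have qn : pdiv g \in primes n.
    by rewrite mem_primes pp n0 (dvdn_trans pg) ?dvdn_gcdr.
  have [h _] := H _ qn; move: h; rewrite dvdzE /= (dvdn_trans pg) ?dvdn_gcdl //.
have [[u v] /= e] := coprimezP _ _ cX.
exists u, u; split.
  apply/eqP; rewrite eqz_mod_dvd.
  have -> : X * u - 1 = - v * n%:Z by rewrite -e; ring.
  exact: dvdz_mull.
split => //.
apply/eqP; rewrite eqz_mod_dvd.
have -> : Y * u - 1 = - v * n%:Z - (X - Y) * u by rewrite -e; ring.
by apply: rpredB; [apply: dvdz_mull | apply: dvdz_mulr].
Qed.

Lemma L2 p k x y : prime p -> (0 < k)%N ->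
  Cp p k (x %/ gcdz x y)%Z (y %/ gcdz x y)%Z <-> Rel p k x y.
Proof.
move=> pp k0; have p0 : ~~ (p%:Z %| 0)%Z = false by rewrite dvdz0.
have gx := dvdz_gcdl x y; have gy := dvdz_gcdr x y.
split.
  move=> [pX [pY pXY]].
  have x0 : x != 0 by apply/eqP => x0; move: pX; rewrite x0 div0z p0.
  have y0 : y != 0 by apply/eqP => y0; move: pY; rewrite y0 div0z p0.
  split => //; split => //.
  exists (x %/ gcdz x y)%Z, (y %/ gcdz x y)%Z; split => //.
  exact: mulz_divCA_gcd.
move=> [x0 [y0 [s [t [e [pt pst]]]]]].
set g := gcdz x y in gx gy *.
have g0 : g != 0 by rewrite gcdz_eq0 negb_and x0.
set X := (x %/ g)%Z; set Y := (y %/ g)%Z.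
have xE : x = X * g by rewrite divzK.
have yE : y = Y * g by rewrite divzK.
have e' : X * t = Y * s.
  apply: (mulIf g0); transitivity (x * t); first by rewrite xE; ring.
  by rewrite e yE; ring.
have ps := ndvd_s pp k0 pt pst.
have pY : ~~ (p%:Z %| Y)%Z.
  apply/negP => pY.
  have pX : (p%:Z %| X)%Z.
    have : (p%:Z %| X * t)%Z by rewrite e' dvdz_mulr.
    by rewrite Euclid_z // (negbTE pt) orbF.
  have h : (p%:Z * g %| gcdz x y)%Z.
    rewrite dvdz_gcd; apply/andP; split; [rewrite {1}xE | rewrite {1}yE].
      exact: dvdz_mul pX (dvdzz g).
    exact: dvdz_mul pY (dvdzz g).
  have : (p%:Z * g %| g)%Z := h.
  rewrite dvdzE abszM -{2}(mul1n `|g|%N) dvdn_pmul2r ?absz_gt0 // dvdn1 /=.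
  by move=> /eqP p1; move: pp; rewrite p1.
split.
  apply/negP => pX.
  have : (p%:Z %| Y * s)%Z by rewrite -e' dvdz_mulr.
  by rewrite Euclid_z // (negbTE ps) (negbTE pY).
split => //.
have cpt : coprimez (p ^ k)%N%:Z t.
  by rewrite coprimezE /= coprime_pexpl // prime_coprime.
rewrite -(Gauss_dvdzl _ cpt).
have -> : (X - Y) * t = Y * (s - t) by rewrite mulrBl e'; ring.
exact: dvdz_mull.
Qed.
Lemma Rel_prod_in p k (I : eqType) (r : seq I) (P : pred I) (F G : I -> int) :
  prime p -> (forall i, i \in r -> P i -> Rel p k (F i) (G i)) ->
  Rel p k (\prod_(i <- r | P i) F i) (\prod_(i <- r | P i) G i).
Proof.
move=> pp H; rewrite big_seq_cond [X in Rel _ _ _ X]big_seq_cond.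
by apply: Rel_prod => // i /andP [ir Pi]; apply: H.
Qed.

Lemma IC n x y : (0 < n)%N ->
  inv_congr n%:Z (x %/ gcdz x y)%Z (y %/ gcdz x y)%Z <->
  (forall q, q \in primes n -> Rel q (logn q n) x y).
Proof.
move=> n0; rewrite L1 //; split => H q qn.
  have qp : prime q by move: qn; rewrite mem_primes => /andP[].
  by apply/L2 => //; [rewrite logn_gt0 | apply: H].
have qp : prime q by move: qn; rewrite mem_primes => /andP[].
by apply/L2 => //; [rewrite logn_gt0 | apply: H].
Qed.

Lemma ICpk p k x y : prime p -> (0 < k)%N ->
  inv_congr (p ^ k)%N%:Z (x %/ gcdz x y)%Z (y %/ gcdz x y)%Z <-> Rel p k x y.
Proof.
move=> pp k0; rewrite IC ?expn_gt0 ?prime_gt0 // primesX // primes_prime //.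
split; first by move=> /(_ p); rewrite pfactorK // inE eqxx => /(_ isT).
by move=> H q; rewrite inE => /eqP ->; rewrite pfactorK.
Qed.

Lemma key a p r m : prime p -> (0 < r)%N -> (0 < m)%N -> coprime p m ->
  (forall d, d \in divisors m -> d != 1%N ->
     Rel p r (a (p ^ r * (m %/ d))%N) (a (p ^ r.-1 * (m %/ d))%N)) ->
  (Rel p r (Aplus a (p ^ r * m)%N) (Aminus a (p ^ r * m)%N) <->
   Rel p r (a (p ^ r * m)%N) (a (p ^ r.-1 * m)%N)).
Proof.
move=> pp r0 m0 cpm H.
rewrite /Aplus /Aminus !prod_split ?oppr_eq0 // opprK.
have one : forall F : nat -> int, \prod_(d <- divisors m | moebius d == 1) F d =
    F 1%N * \prod_(d <- [seq d <- divisors m | moebius d == 1] | d != 1%N) F d.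
  move=> F; rewrite -big_filter (bigD1_seq 1%N) //.
    by rewrite mem_filter mu1 eqxx divisor1.
  by rewrite filter_uniq // divisors_uniq.
rewrite !one !divn1.
set P1b := \prod_(d <- [seq d <- divisors m | moebius d == 1] | d != 1%N) a (p ^ r * (m %/ d))%N.
set P1c := \prod_(d <- [seq d <- divisors m | moebius d == 1] | d != 1%N) a (p ^ r.-1 * (m %/ d))%N.
set Pmb := \prod_(d <- divisors m | moebius d == -1) a (p ^ r * (m %/ d))%N.
set Pmc := \prod_(d <- divisors m | moebius d == -1) a (p ^ r.-1 * (m %/ d))%N.
set A := a (p ^ r * m)%N; set C := a (p ^ r.-1 * m)%N.
have -> : A * P1b * Pmc = A * (P1b * Pmc) by ring.
have -> : Pmb * (C * P1c) = C * (P1c * Pmb) by ring.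
have RW : Rel p r (P1b * Pmc) (P1c * Pmb).
  apply: Rel_mul => //.
    apply: Rel_prod_in => // d; rewrite mem_filter => /andP [_ dm] d1.
    exact: H.
  apply: Rel_sym => //; apply: Rel_prod_in => // d dm /eqP md.
  apply: H => //; apply/eqP => d1; move: md; rewrite d1 mu1 => /eqP.
  by rewrite -subr_eq0 opprK.
split.
  move=> HH; apply: (Rel_cancel pp r0 RW).
  by rewrite mulrC [X in Rel _ _ _ X]mulrC.
by move=> HH; apply: Rel_mul.
Qed.

Lemma EG_iff a : strong_EG a <->
  (forall n q, (0 < n)%N -> q \in primes n ->
     Rel q (logn q n) (Aplus a n) (Aminus a n)).
Proof.
split.
  move=> H n q n0 qn; have qp : prime q by move: qn; rewrite mem_primes => /andP[].
  have := H n n0; rewrite /= gcdzC IC // => /(_ q qn).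
  apply: Rel_sym => //; by rewrite logn_gt0.
move=> H n n0 /=; rewrite gcdzC IC // => q qn.
have qp : prime q by move: qn; rewrite mem_primes => /andP[].
apply: Rel_sym => //; [by rewrite logn_gt0 | exact: H].
Qed.

Lemma split_p p n : prime p -> (0 < n)%N ->
  exists m, [/\ n = (p ^ logn p n * m)%N, (0 < m)%N & coprime p m].
Proof.
move=> pp n0; exists (n %/ p ^ logn p n)%N.
have hd := pfactor_dvdnn p n.
split.
- by rewrite mulnC divnK.
- by rewrite divn_gt0 ?expn_gt0 ?prime_gt0 // dvdn_leq.
- rewrite prime_coprime //; apply/negP => /dvdnP [k kE].
  have : (p ^ (logn p n).+1 %| n)%N.
    apply/dvdnP; exists k; rewrite -{1}(divnK hd) kE expnSr; ring.
  by rewrite pfactor_dvdn // ltnn.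
Qed.

Unset Implicit Arguments.
Theorem lemma1 (a : nat -> int) :
  strong_EG a <->
  (forall p r m : nat, prime p -> (0 < r)%N -> (0 < m)%N ->
     let x := a (p ^ r * m)%N in
     let y := a (p ^ r.-1 * m)%N in
     let g := gcdz x y in
     inv_congr (p ^ r)%N%:Z (x %/ g)%Z (y %/ g)%Z).
Proof.
rewrite EG_iff.
have RHS_iff : (forall p r m : nat, prime p -> (0 < r)%N -> (0 < m)%N ->
     let x := a (p ^ r * m)%N in
     let y := a (p ^ r.-1 * m)%N in
     let g := gcdz x y in
     inv_congr (p ^ r)%N%:Z (x %/ g)%Z (y %/ g)%Z) <->
  (forall p r m : nat, prime p -> (0 < r)%N -> (0 < m)%N ->
     Rel p r (a (p ^ r * m)%N) (a (p ^ r.-1 * m)%N)).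
  by split => H p r m pp r0 m0; [apply/ICpk => //; apply: H | apply/ICpk => //; apply: H].
rewrite RHS_iff; split.
- move=> E p r m pp r0 m0.
  have claim : forall m, (0 < m)%N -> coprime p m -> forall r, (0 < r)%N ->
      Rel p r (a (p ^ r * m)%N) (a (p ^ r.-1 * m)%N).
    elim/ltn_ind => M IH m1 cpm R r1.
    have K := key (a:=a) pp r1 m1 cpm; apply K; clear K.
      move=> d dm d1; move: dm; rewrite -dvdn_divisors // => dm.
      have d0 : (0 < d)%N by apply: dvdn_gt0 dm.
      apply: IH => //.
      + by apply: ltn_Pdiv => //; rewrite ltn_neqAle eq_sym d1 d0.
      + by rewrite divn_gt0 // dvdn_leq.
      + exact: coprime_dvdr (dvdn_div dm) cpm.
    have n0 : (0 < p ^ R * M)%N by rewrite muln_gt0 expn_gt0 prime_gt0.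
    have := E (p ^ R * M)%N p n0.
    have lR : logn p (p ^ R * M)%N = R.
      rewrite lognM ?(pfactorK R pp) ?(logn_coprime cpm) ?addn0 //.
      by rewrite expn_gt0 prime_gt0.
    rewrite lR.
    apply; rewrite mem_primes pp n0 /=.
    by rewrite dvdn_mulr // -{1}(expn1 p) dvdn_exp2l.
  have [m' [mE m'0 cpm']] := split_p pp m0.
  set s := logn p m in mE.
  have := claim m' m'0 cpm' (r + s)%N; rewrite addn_gt0 r0 => /(_ isT).
  move/(Rel_weak (leq_addr s r)).
  have -> : (p ^ (r + s) * m' = p ^ r * m)%N by rewrite mE expnD mulnA.
  have -> : (p ^ (r + s).-1 * m' = p ^ r.-1 * m)%N.
    by rewrite mE mulnA -expnD; congr (p ^ _ * _)%N; lia.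
  by [].
- move=> H n q n0 qn.
  have qp : prime q by move: qn; rewrite mem_primes => /andP[].
  have [m [nE m0 cqm]] := split_p qp n0.
  have [r rE] : exists r, logn q n = r by eexists.
  rewrite rE in nE *.
  have r0 : (0 < r)%N by rewrite -rE logn_gt0.
  rewrite nE; apply/(key (a:=a) qp r0 m0 cqm).
    move=> d dm _; apply: H => //.
    move: dm; rewrite -dvdn_divisors // => dm.
    by rewrite divn_gt0 ?(dvdn_gt0 m0 dm) // dvdn_leq.
  apply: H => //.
Qed.
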